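(* Let $\ell>0$, let $F$ be a smooth closed front wheel trajectory, and suppose there is a closed rear wheel trajectory $R$ of the bicycle of length $\ell$ with signed length $L$. Then the bicycle monodromy $M_F$ is parabolic if and only if $L=0$.
   Context: Bicycle model: a segment $RF$ of fixed length $\ell$ moves in the plane ($F$ = front wheel, $R$ = rear wheel) subject to the constraint that the velocity of $R$ is always parallel to $RF$. For a closed front path, the bicycle monodromy $M_F$ is the self-map of the circle of radius $\ell$ sending the initial position of $R$ relative to $F$ to its terminal position; it is a Möbius transformation, called hyperbolic if it has two fixed points, parabolic if it has exactly one fixed point, elliptic if none. A closed rear track corresponds to a fixed point of $M_F$. The signed length of the rear track is the alternating sum of the lengths of its smooth pieces, the sign changing at each cusp; equivalently $\int\cos\alpha\,dt$ where $t$ is arc length on $F$ and $\alpha=\arg F'-\arg\overrightarrow{RF}$ is the steering angle. *)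

(* Defs.v *)
From Stdlib Require Import Reals ZArith.
From Coquelicot Require Import Coquelicot.
Open Scope R_scope.

(* The rear wheel is
   R(t) = F(t) - ell * (cos th(t), sin th(t)), i.e. th(t) is the angle of the
   vector RF (position of R relative to F is the point -ell*(cos th, sin th)
   of the circle of radius ell, parametrized by th mod 2*pi). *)

Definition smooth (f : R -> R) : Prop :=
  forall (n : nat) (x : R), ex_derive (Derive_n f n) x.

Definition periodic (f : R -> R) (T : R) : Prop :=
  forall t, f (t + T) = f t.

(* The no-skid constraint "R' is parallel to RF", written for the angle th:
   R' = F' - ell*th'*(-sin th, cos th) is parallel to (cos th, sin th)
   iff  ell * th' = - F1' sin th + F2' cos th. *)
Definition bicycle_sol (ell : R) (F1 F2 : R -> R) (th : R -> R) : Prop :=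
  forall t, is_derive th t
    ((- Derive F1 t * sin (th t) + Derive F2 t * cos (th t)) / ell).

Definition same_point (a b : R) : Prop :=
  exists k : Z, b = a + 2 * IZR k * PI.

(* th0 (a point of the circle) is a fixed point of the monodromy M_F over one
   period [0,T]: the solution starting at th0 returns to th0 mod 2*pi. *)
Definition monodromy_fixed (ell T : R) (F1 F2 : R -> R) (th0 : R) : Prop :=
  exists th : R -> R, bicycle_sol ell F1 F2 th /\ th 0 = th0 /\
    same_point th0 (th T).

(* M_F is parabolic: exactly one fixed point on the circle. *)
Definition monodromy_parabolic (ell T : R) (F1 F2 : R -> R) : Prop :=
  exists th0, monodromy_fixed ell T F1 F2 th0 /\
    forall th1, monodromy_fixed ell T F1 F2 th1 -> same_point th0 th1.

Definition monodromy_identity (ell T : R) (F1 F2 : R -> R) : Prop :=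
  forall th0, monodromy_fixed ell T F1 F2 th0.

Definition closed_rear_track (ell T : R) (F1 F2 th : R -> R) : Prop :=
  bicycle_sol ell F1 F2 th /\ same_point (th 0) (th T).

(* Signed length  int_0^T cos(alpha) dt,  alpha = arg F' - th, with t the arc
   length of F (so F' = (cos(arg F'), sin(arg F'))):
   cos(alpha) = F1' cos th + F2' sin th. *)
Definition signed_length (T : R) (F1 F2 th : R -> R) : R :=
  RInt (fun t => Derive F1 t * cos (th t) + Derive F2 t * sin (th t)) 0 T.

(* Main.v *)
From Stdlib Require Import Reals Lra ZArith.
From Coquelicot Require Import Coquelicot.
Open Scope R_scope.
From Stdlib Require Import Classical Lia.
Require Import Defs.

Lemma antider (f : R -> R) : (forall t, continuous f t) ->
  forall t, is_derive (fun x => RInt f 0 x) t (f t).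
Proof.
intros Hc t. apply (is_derive_RInt f (fun x => RInt f 0 x) 0 t).
- exists (mkposreal 1 Rlt_0_1). intros x _. apply (RInt_correct f 0 x). apply ex_RInt_continuous.
  intros; apply Hc.
- apply Hc.
Qed.

Lemma zero_deriv_const (M : R -> R) : (forall t, is_derive M t 0) -> forall t, M t = M 0.
Proof.
intros H t. destruct (Rtotal_order t 0) as [h|[h|h]].
- apply (eq_is_derive M t 0); auto.
- subst; auto.
- symmetry; apply (eq_is_derive M 0 t); auto.
Qed.

Lemma lin_zero (N h : R -> R) : (forall t, continuous h t) ->
  (forall t, is_derive N t (h t * N t)) -> N 0 = 0 -> forall t, N t = 0.
Proof.
intros Hc HN H0 t.
set (H := fun x => RInt h 0 x).
assert (HH : forall t, is_derive H t (h t)) by (apply antider; auto).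
assert (forall t, is_derive (fun x => N x * exp (- H x)) t 0).
{ intros x. evar (l : R). replace 0 with l. 
  - apply (is_derive_mult N (fun x => exp (- H x))). apply HN.
    apply (is_derive_comp exp (fun x => - H x)). apply is_derive_Reals, derivable_pt_lim_exp.
    apply (is_derive_opp H). apply HH. intros; apply Rmult_comm.
  - unfold l. simpl. unfold plus, mult, scal, opp; simpl. unfold mult; simpl. ring. }
pose proof (zero_deriv_const _ H1 t). simpl in H2. rewrite H0 in H2.
assert (exp (- H t) > 0) by apply exp_pos. nra.
Qed.

Lemma sin_kpi (k : Z) : sin (IZR k * PI) = 0.
Proof. apply sin_eq_0_1; eauto. Qed.

Lemma sin_sh2 x (k : Z) : sin (x + 2 * IZR k * PI) = sin x.
Proof.
rewrite sin_plus. replace (2 * IZR k * PI) with (2 * (IZR k * PI)) by ring.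
rewrite sin_2a, cos_2a_sin, sin_kpi. ring.
Qed.
Lemma cos_sh2 x (k : Z) : cos (x + 2 * IZR k * PI) = cos x.
Proof.
rewrite cos_plus. replace (2 * IZR k * PI) with (2 * (IZR k * PI)) by ring.
rewrite sin_2a, cos_2a_sin, sin_kpi. ring.
Qed.

Lemma cos2atan x : cos (2 * atan x) = (1 - x^2) / (1 + x^2).
Proof.
rewrite cos_2a, cos_atan, sin_atan.
assert (Hs : sqrt (1 + x²) * sqrt (1 + x²) = 1 + x^2).
{ rewrite sqrt_sqrt. unfold Rsqr; ring. pose proof (Rle_0_sqr x); lra. }
assert (sqrt (1 + x²) <> 0). { intro h; rewrite h in Hs. nra. }
set (Sq := sqrt (1 + x²)) in *. set (S := sqrt (1 + x²)) in *. rewrite <- Hs. field. auto.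
Qed.

Lemma sin2atan x : sin (2 * atan x) = 2 * x / (1 + x^2).
Proof.
rewrite sin_2a, cos_atan, sin_atan.
assert (Hs : sqrt (1 + x²) * sqrt (1 + x²) = 1 + x^2).
{ rewrite sqrt_sqrt. unfold Rsqr; ring. pose proof (Rle_0_sqr x); lra. }
assert (sqrt (1 + x²) <> 0). { intro h; rewrite h in Hs. nra. }
set (Sq := sqrt (1 + x²)) in *. rewrite <- Hs. field. auto.
Qed.

Lemma explicit_sol (ell : R) (d1 d2 a E Kf : R -> R) (v0 : R) :
 ell <> 0 -> (forall t, is_derive a t ((-d1 t * sin (a t) + d2 t * cos (a t))/ell)) ->
 (forall t, is_derive E t ((d1 t * cos (a t) + d2 t * sin (a t))/ell * E t)) -> (forall t, E t <> 0) ->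
 (forall t, is_derive Kf t ((-d1 t * sin (a t) + d2 t * cos (a t))/(ell * E t))) ->
 forall t, is_derive (fun t => a t + PI - 2*atan (E t * (v0 + Kf t))) t
   ((-d1 t * sin (a t + PI - 2*atan (E t * (v0 + Kf t))) + d2 t * cos (a t + PI - 2*atan (E t * (v0 + Kf t))))/ell).
Proof.
intros Hl Ha HE HE0 HK t.
set (v := fun t => E t * (v0 + Kf t)).
assert (Hv : is_derive v t ((d1 t * cos (a t) + d2 t * sin (a t)) * v t / ell +
   (-d1 t * sin (a t) + d2 t * cos (a t)) / ell)).
{ unfold v. evar (l : R). replace (_ + _) with l.
  apply (is_derive_mult E (fun t => v0 + Kf t)). apply HE.
  apply (is_derive_plus (fun _ => v0) Kf). apply is_derive_const. apply HK.
  intros; apply Rmult_comm.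
  unfold l; simpl. unfold plus, mult, zero; simpl. specialize (HE0 t). field. auto. }
assert (Hat : is_derive (fun t => atan (v t)) t (/ (1 + (v t)^2) * ((d1 t * cos (a t) + d2 t * sin (a t)) * v t / ell +
   (-d1 t * sin (a t) + d2 t * cos (a t)) / ell))).
{ evar (l : R). replace (/ (1 + _) * _) with l.
  apply (is_derive_comp atan v). apply is_derive_Reals, derivable_pt_lim_atan. apply Hv.
  unfold l; simpl. unfold scal; simpl; unfold mult; simpl. ring. }
change (fun t => a t + PI - 2 * atan (E t * (v0 + Kf t))) with (fun t => a t + PI - 2 * atan (v t)).
change (E t * (v0 + Kf t)) with (v t).
evar (l : R). replace (_ / ell) with l.
apply (is_derive_minus (fun t => a t + PI) (fun t => 2 * atan (v t))).
apply (is_derive_plus a (fun _ => PI)). apply Ha. apply is_derive_const.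
apply (is_derive_scal (fun t => atan (v t))). apply Hat.
unfold l; simpl. unfold minus, plus, opp, zero, scal, mult; simpl. unfold mult; simpl.
replace (a t + PI - 2 * atan (v t)) with ((a t - 2 * atan (v t)) + PI) by ring.
rewrite neg_sin, neg_cos, sin_minus, cos_minus, cos2atan, sin2atan.
assert (1 + v t ^ 2 > 0) by nra.
field. lra.
Qed.

Lemma u_deriv (ell : R) (d1 d2 a b : R -> R) t :
 ell <> 0 ->
 is_derive a t ((-d1 t * sin (a t) + d2 t * cos (a t))/ell) ->
 is_derive b t ((-d1 t * sin (b t) + d2 t * cos (b t))/ell) ->
 is_derive (fun t => (b t - a t)/2) t
  (- sin ((b t - a t)/2) * ((-d1 t * sin (a t) + d2 t * cos (a t)) * sin ((b t - a t)/2)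
      + (d1 t * cos (a t) + d2 t * sin (a t)) * cos ((b t - a t)/2)) / ell).
Proof.
intros Hl Ha Hb.
evar (l : R). replace (_ / ell) with l.
apply (is_derive_ext (fun t => (b t - a t) * / 2)). reflexivity.
apply (is_derive_mult (fun t => b t - a t) (fun _ => /2)). apply (is_derive_minus b a). apply Hb. apply Ha.
apply is_derive_const. intros; apply Rmult_comm.
unfold l; simpl. unfold minus, plus, opp, mult, zero; simpl.
set (u := (b t - a t)/2).
replace (b t) with (a t + 2 * u) by (unfold u; field).
rewrite sin_plus, cos_plus, sin_2a, cos_2a_sin. field. auto.
Qed.

Lemma N_zero (ell : R) (d1 d2 a b vt : R -> R) :
 ell <> 0 ->
 (forall t, ex_derive d1 t) -> (forall t, ex_derive d2 t) ->
 (forall t, is_derive a t ((-d1 t * sin (a t) + d2 t * cos (a t))/ell)) ->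
 (forall t, is_derive b t ((-d1 t * sin (b t) + d2 t * cos (b t))/ell)) ->
 (forall t, is_derive vt t (((d1 t * cos (a t) + d2 t * sin (a t)) * vt t + (-d1 t * sin (a t) + d2 t * cos (a t)))/ell)) ->
 cos ((b 0 - a 0)/2) = vt 0 * sin ((b 0 - a 0)/2) ->
 forall t, cos ((b t - a t)/2) = vt t * sin ((b t - a t)/2).
Proof.
intros Hl Hd1 Hd2 Ha Hb Hv H0 t.
assert (Hexa : forall t, ex_derive a t) by (intro x; eexists; apply Ha).
assert (Hexb : forall t, ex_derive b t) by (intro x; eexists; apply Hb).
set (h := fun t => sin ((b t - a t)/2) * ((d1 t * cos (a t) + d2 t * sin (a t)) * sin ((b t - a t)/2)
   - (-d1 t * sin (a t) + d2 t * cos (a t)) * cos ((b t - a t)/2)) / ell).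
assert (Hh : forall t, continuous h t).
{ intro x. apply (ex_derive_continuous (K := R_AbsRing) (V := R_NormedModule)). unfold h. auto_derive.
  repeat split; first [apply Hexa | apply Hexb | apply Hd1 | apply Hd2]. }
pose proof (lin_zero (fun t => cos ((b t - a t)/2) - vt t * sin ((b t - a t)/2)) h Hh) as L.
assert (forall t, cos ((b t - a t)/2) - vt t * sin ((b t - a t)/2) = 0).
2: { specialize (H t); lra. }
apply L. 2: { simpl; lra. }
intro x. pose proof (u_deriv ell d1 d2 a b x Hl (Ha x) (Hb x)) as Hu.
evar (l : R). replace (h x * _) with l.
apply (is_derive_minus (fun t => cos ((b t - a t)/2)) (fun t => vt t * sin ((b t - a t)/2))).
apply (is_derive_comp cos (fun t => (b t - a t)/2)). apply is_derive_Reals, derivable_pt_lim_cos. apply Hu.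
apply (is_derive_mult vt (fun t => sin ((b t - a t)/2))). apply Hv.
apply (is_derive_comp sin (fun t => (b t - a t)/2)). apply is_derive_Reals, derivable_pt_lim_sin. apply Hu.
intros; apply Rmult_comm.
unfold l, h; simpl. unfold minus, plus, opp, mult, scal; simpl. unfold mult; simpl.
set (P := cos ((b x - a x)/2)). set (Q := sin ((b x - a x)/2)).
assert (Hpq : P^2 + Q^2 = 1) by (unfold P, Q; rewrite <- (sin2_cos2 ((b x - a x)/2)); unfold Rsqr; ring).
apply Rminus_diag_uniq.
set (c := d1 x * cos (a x) + d2 x * sin (a x)). set (s := -d1 x * sin (a x) + d2 x * cos (a x)).
transitivity (Q * (s + c * vt x) / ell * (P^2 + Q^2 - 1)).
unfold c, s. field. auto.
rewrite Hpq. ring.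
Qed.

Lemma antider_ex (f : R -> R) : (forall t, continuous f t) ->
  exists G : R -> R, (forall x, G x = RInt f 0 x) /\ forall t, is_derive G t (f t).
Proof. intros Hc. exists (fun x => RInt f 0 x). split; auto. apply antider; auto. Qed.

Lemma shift_sol ell F1 F2 f (j : Z) : bicycle_sol ell F1 F2 f ->
  bicycle_sol ell F1 F2 (fun t => f t + 2 * IZR j * PI).
Proof.
intros H t. rewrite sin_sh2, cos_sh2.
evar (l : R). replace (_ / ell) with l.
apply (is_derive_plus f (fun _ => 2 * IZR j * PI)). apply H. apply is_derive_const.
unfold l; simpl; unfold plus, zero; simpl. ring.
Qed.

Lemma not_same_sin x y : ~ same_point x y -> sin ((y - x)/2) <> 0.
Proof.
intros H Hs. apply H. destruct (sin_eq_0_0 _ Hs) as [k Hk]. exists k. lra.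
Qed.

Theorem corollary3p2 (ell T : R) (F1 F2 th : R -> R) (L : R) :
  0 < ell -> 0 < T ->
  smooth F1 -> smooth F2 ->
  periodic F1 T -> periodic F2 T ->
  (forall t, (Derive F1 t) ^ 2 + (Derive F2 t) ^ 2 = 1) ->
  closed_rear_track ell T F1 F2 th ->
  L = signed_length T F1 F2 th ->
  ~ monodromy_identity ell T F1 F2 ->
  (monodromy_parabolic ell T F1 F2 <-> L = 0).
Proof.
intros Hl HT sF1 sF2 _ _ _ [Ha [k0 Hk0]] HL Hnid.
assert (Hl0 : ell <> 0) by lra.
assert (Hd1 : forall t, ex_derive (Derive F1) t) by (intro t; exact (sF1 1%nat t)).
assert (Hd2 : forall t, ex_derive (Derive F2) t) by (intro t; exact (sF2 1%nat t)).
assert (Hexa : forall t, ex_derive th t) by (intro x; eexists; apply Ha).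
set (c := fun t => Derive F1 t * cos (th t) + Derive F2 t * sin (th t)).
assert (Hc : forall t, continuous c t).
{ intro x. apply (ex_derive_continuous (K := R_AbsRing) (V := R_NormedModule)). unfold c. auto_derive.
  repeat split; first [apply Hexa | apply Hd1 | apply Hd2]. }
destruct (antider_ex c Hc) as [C [HCv HC]].
assert (HC0 : C 0 = 0) by (rewrite HCv; exact (RInt_point (V := R_CompleteNormedModule) 0 _)).
assert (HCT : C T = L) by (rewrite HCv, HL; reflexivity).
set (E := fun t => exp (C t / ell)).
assert (HE : forall t, is_derive E t (c t / ell * E t)).
{ intro x. evar (l : R). replace (c x / ell * E x) with l.
  apply (is_derive_comp exp (fun t => C t / ell)). apply is_derive_Reals, derivable_pt_lim_exp.
  apply (is_derive_mult C (fun _ => / ell)). apply HC. apply is_derive_const. intros; apply Rmult_comm.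
  unfold l; simpl; unfold scal, plus, mult, zero; simpl; unfold mult; simpl. unfold E. rewrite Rmult_0_r, Rplus_0_r. reflexivity. }
assert (HEpos : forall t, 0 < E t) by (intro; apply exp_pos).
assert (HE0 : E 0 = 1) by (unfold E; rewrite HC0; unfold Rdiv; rewrite Rmult_0_l; apply exp_0).
assert (HET : E T = exp (L / ell)) by (unfold E; rewrite HCT; reflexivity).
set (kf := fun t => (- Derive F1 t * sin (th t) + Derive F2 t * cos (th t)) / (ell * E t)).
assert (Hkc : forall t, continuous kf t).
{ intro x. apply (ex_derive_continuous (K := R_AbsRing) (V := R_NormedModule)).
  apply (ex_derive_div (fun t => - Derive F1 t * sin (th t) + Derive F2 t * cos (th t)) (fun t => ell * E t)).
  auto_derive. repeat split; first [apply Hexa | apply Hd1 | apply Hd2].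
  apply (ex_derive_mult (fun _ => ell) E). apply ex_derive_const. eexists; apply HE.
  specialize (HEpos x). nra. }
destruct (antider_ex kf Hkc) as [Kf [HKv HK]].
assert (HK0 : Kf 0 = 0) by (rewrite HKv; exact (RInt_point (V := R_CompleteNormedModule) 0 _)).
set (K := Kf T).
set (vf := fun v0 t => E t * (v0 + Kf t)).
assert (Hvf0 : forall v0, vf v0 0 = v0) by (intro; unfold vf; rewrite HE0, HK0; ring).
assert (HvfT : forall v0, vf v0 T = exp (L / ell) * (v0 + K)) by (intro; unfold vf; rewrite HET; reflexivity).
assert (Hvd : forall v0 t, is_derive (vf v0) t ((c t * vf v0 t + (- Derive F1 t * sin (th t) + Derive F2 t * cos (th t))) / ell)).
{ intros v0 x. unfold vf. evar (l : R). replace (_ / ell) with l.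
  apply (is_derive_mult E (fun t => v0 + Kf t)). apply HE.
  apply (is_derive_plus (fun _ => v0) Kf). apply is_derive_const. apply HK.
  intros; apply Rmult_comm.
  unfold l; simpl. unfold plus, mult, zero; simpl. unfold kf. specialize (HEpos x). field. lra. }
assert (Hbs : forall v0, bicycle_sol ell F1 F2 (fun t => th t + PI - 2 * atan (vf v0 t))).
{ intros v0 x. apply (explicit_sol ell (Derive F1) (Derive F2) th E Kf v0 Hl0 Ha).
  exact HE. intro; specialize (HEpos t); lra. exact HK. }
assert (Hfa : monodromy_fixed ell T F1 F2 (th 0)).
{ exists th. split; [exact Ha | split; [reflexivity | exists k0; exact Hk0]]. }
split.
-
  intros [th0 [_ Huniq]].
  destruct (Req_dec L 0) as [|HL0]; auto. exfalso.
  set (lam := exp (L / ell)).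
  assert (Hlam : lam <> 1).
  { intro h. apply HL0. unfold lam in h. rewrite <- exp_0 in h. apply exp_inv in h.
    apply (Rmult_eq_reg_r (/ ell)). rewrite Rmult_0_l; exact h. apply Rinv_neq_0_compat; lra. }
  set (vs := lam * K / (1 - lam)).
  assert (Hvs : vf vs T = vs). { rewrite HvfT. fold lam. unfold vs. field. lra. }
  assert (Hfb : monodromy_fixed ell T F1 F2 (th 0 + PI - 2 * atan vs)).
  { eexists. split. apply (Hbs vs). split. simpl. rewrite Hvf0. reflexivity.
    exists k0. simpl. rewrite Hvs, Hk0. ring. }
  destruct (Huniq _ Hfa) as [m1 Hm1]. destruct (Huniq _ Hfb) as [m2 Hm2].
  pose proof (atan_bound vs).
  assert (h1 : 0 < IZR (m2 - m1) * (2 * PI)) by (rewrite minus_IZR; nra).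
  assert (h2 : IZR (m2 - m1) * (2 * PI) < 1 * (2 * PI)) by (rewrite minus_IZR; nra).
  pose proof PI_RGT_0.
  apply Rmult_lt_reg_r in h2; [|lra].
  assert (h3 : 0 < IZR (m2 - m1)) by nra.
  apply lt_IZR in h2. apply lt_IZR in h3. lia.
- intros L0.
  assert (Hlam : exp (L / ell) = 1) by (rewrite L0; unfold Rdiv; rewrite Rmult_0_l; apply exp_0).
  assert (HKnz : K <> 0).
  { intro K0. apply Hnid. intro th0.
    destruct (classic (same_point (th 0) th0)) as [[j Hj]|Hns].
    - exists (fun t => th t + 2 * IZR j * PI). split. apply shift_sol; auto.
      split. simpl; lra. exists k0. simpl. rewrite Hk0. lra.
    - pose proof (not_same_sin _ _ Hns) as HQ.
      set (u0 := (th0 - th 0)/2) in *.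
      set (v0 := cos u0 / sin u0).
      assert (Hsa : sin ((PI/2 - atan v0) - u0) = 0).
      { rewrite sin_minus, sin_shift, cos_shift, cos_atan, sin_atan.
        unfold v0. field. split; auto.
        intro h. apply sqrt_eq_0 in h. pose proof (pow2_ge_0 (cos u0 / sin u0)). unfold Rsqr in h. nra.
        pose proof (Rle_0_sqr (cos u0 / sin u0)). lra. }
      destruct (sin_eq_0_0 _ Hsa) as [j Hj].
      exists (fun t => (th t + PI - 2 * atan (vf v0 t)) + 2 * IZR (- j) * PI).
      split. apply shift_sol, Hbs. split.
      + simpl. rewrite Hvf0, opp_IZR. unfold u0 in Hj. lra.
      + exists k0. simpl. rewrite HvfT, Hlam, K0, Hk0, opp_IZR.
        replace (1 * (v0 + 0)) with v0 by ring.
        unfold u0 in Hj. lra. }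
  exists (th 0). split; auto.
  intros th1 [b [Hb [Hb0 [m Hm]]]].
  destruct (classic (same_point (th 0) th1)) as [|Hns]; auto. exfalso.
  pose proof (not_same_sin _ _ Hns) as HQ. rewrite <- Hb0 in HQ.
  set (v0 := cos ((b 0 - th 0)/2) / sin ((b 0 - th 0)/2)).
  assert (HN := N_zero ell (Derive F1) (Derive F2) th b (vf v0) Hl0 Hd1 Hd2 Ha Hb (Hvd v0)).
  specialize (HN ltac:(rewrite Hvf0; unfold v0; field; auto) T).
  rewrite HvfT, Hlam, Rmult_1_l in HN.
  set (u0 := (b 0 - th 0)/2) in *.
  set (uT := (b T - th T)/2) in *.
  assert (HuT : uT - u0 = IZR (m - k0) * PI).
  { unfold uT, u0. rewrite Hk0, minus_IZR, Hm, Hb0. field. }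
  assert (Hs : sin (uT - u0) = 0) by (rewrite HuT; apply sin_kpi).
  rewrite sin_minus in Hs.
  assert (HQT : sin uT <> 0).
  { intro h. rewrite h, Rmult_0_r in HN. pose proof (sin2_cos2 uT). rewrite h, HN in H. unfold Rsqr in H. lra. }
  assert (Hv0 : v0 * sin u0 = cos u0) by (unfold v0; field; auto).
  rewrite HN in Hs.
  assert (HK2 : K * (sin uT * sin u0) = 0).
  { transitivity (-(sin uT * (v0 * sin u0) - (v0 + K) * sin uT * sin u0)). ring.
    rewrite Hv0, Hs. ring. }
  apply Rmult_integral in HK2. destruct HK2 as [|HK2]; auto.
  apply Rmult_integral in HK2; tauto.
Qed.
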